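(* Let $k\in\omega\setminus\{0,1\}$ and let $\varphi:\omega\to\omega$ be a nondecreasing function with $\varphi(n)\ge n$ for all $n\in\omega$ and $\varphi(0)=0$. Then there exist a closed class $A$ of decision tables from $\mathcal M_k^\infty$ and a bounded complexity measure $\psi$ such that $\mathcal H^\infty_{\psi,A}$ is everywhere defined and $\varphi(n)\le\mathcal H^\infty_{\psi,A}(n)\le\varphi(n)+n$ for all $n\in\omega$.
   Context: Notation: $\omega=\{0,1,2,\dots\}$; $\mathcal P(\omega)$ is the set of nonempty finite subsets of $\omega$; for $k\in\omega\setminus\{0,1\}$, $E_k=\{0,1,\dots,k-1\}$. $P=\{f_i:i\in\omega\}$ is a set of attributes, $f_i\neq f_j$ for $i\ne j$. Decision tables: $\mathcal M_k^\infty$ is the set of rectangular tables filled with numbers from $E_k$, whose columns are labeled with pairwise different attributes from $P$, whose rows are pairwise different, and each row of which is labeled with a set from $\mathcal P(\omega)$ (its set of decisions). The empty table (no rows) is denoted $\Lambda$ and belongs to $\mathcal M_k^\infty$. For $T\in\mathcal M_k^\infty$: $\Delta(T)$ is the set of rows; $\Pi(T)$ is the intersection of the decision sets of all rows (common decisions); $\mathrm{At}(T)$ is the set of attributes labeling columns. For nonempty $T$ and a word $\alpha=(f_{i_1},\delta_1)\cdots(f_{i_m},\delta_m)$ with $f_{i_j}\in\mathrm{At}(T)$, $\delta_j\in E_k$, $T\alpha$ is the subtable of $T$ consisting of the rows having value $\delta_j$ in the column $f_{i_j}$ for all $j$; for the empty word $\lambda$, $T\lambda=T$. Operations: for $D\subseteq\mathrm{At}(T)$,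 $I(D,T)$ is obtained from $T$ by deleting the columns labeled with attributes from $D$ and, in each group of rows coinciding on the remaining columns, keeping only the first row; $I(\mathrm{At}(T),T)=\Lambda$. For $\nu:E_k^{|\mathrm{At}(T)|}\to\mathcal P(\omega)$, $J(\nu,T)$ is obtained by replacing the decision set of each row $\bar\delta$ by $\nu(\bar\delta)$. $[T]=\{J(\nu,I(D,T)):D\subseteq\mathrm{At}(T),\ \nu:E_k^{|\mathrm{At}(T)\setminus D|}\to\mathcal P(\omega)\}$; for nonempty $A\subseteq\mathcal M_k^\infty$, $[A]=\bigcup_{T\in A}[T]$. $A$ is a closed class if $[A]=A$. Decision trees: a $k$-decision tree is a finite directed rooted tree with at least two nodes in which the root and the edges leaving the root are unlabeled, each terminal node is labeled with a decision from $\omega$, and each other node is labeled with an attribute from $P$, each edge leaving such a node being labeled with a number from $E_k$. $\mathrm{At}(\Gamma)$ is the set of attributes labeling nodes of $\Gamma$. For a complete path $\tau=v_1,d_1,\dots,v_m,d_m,v_{m+1}$ (from the root to a terminal node), $\pi(\tau)=\lambda$ if $m=1$, and otherwise $\pi(\tau)=(f_{i_2},\delta_2)\cdots(f_{i_m},\delta_m)$ where $v_j$ is labeled $f_{i_j}$ and $d_j$ is labeled $\delta_j$; $T(\tau)=T\pi(\tau)$. For $T\ne\Lambda$, a nondeterministic decision tree for $T$ is a $k$-decision tree $\Gamma$ with $\mathrm{At}(\Gamma)\subseteq\mathrm{At}(T)$ such that every row of $T$ belongs to $T(\tau)$ for some complete path $\tau$, and for every complete path $\tau$ either $T(\tau)=\Lambda$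 or the decision at the terminal node of $\tau$ belongs to $\Pi(T(\tau))$. A deterministic decision tree for $T$ is a nondeterministic decision tree for $T$ in which, additionally, exactly one edge leaves the root and the edges leaving any node that is neither the root nor terminal are labeled with pairwise different numbers. Complexity measures: a partially bounded complexity measure is a function $\psi:P^*\to\omega$ on finite words over $P$ such that for all words $\alpha_1,\alpha_2$: $\psi(\alpha_1)=0$ iff $\alpha_1=\lambda$; $\psi(\alpha_1)$ is invariant under permutation of letters; $\psi(\alpha_1)\le\psi(\alpha_1\alpha_2)$; $\psi(\alpha_1\alpha_2)\le\psi(\alpha_1)+\psi(\alpha_2)$. It is bounded if in addition $\psi(\alpha)\ge|\alpha|$ for all $\alpha$. $\psi$ is extended to words $(f_{i_1},\delta_1)\cdots(f_{i_m},\delta_m)$ by $\psi(f_{i_1}\cdots f_{i_m})$. For a $k$-decision tree $\Gamma$, $\psi(\Gamma)=\max_\tau\psi(\pi(\tau))$ over complete paths. For $T\ne\Lambda$, $\psi^d(T)$ (resp. $\psi^a(T)$) is the minimum of $\psi(\Gamma)$ over deterministic (resp. nondeterministic) decision trees $\Gamma$ for $T$; $\psi^d(\Lambda)=\psi^a(\Lambda)=0$. $\mathcal H^\infty_{\psi,A}(n)$ is undefined if the set $\{\psi^d(T):T\in A,\ \psi^a(T)\le n\}$ is infinite, and otherwise equals its maximum; it is everywhere defined if defined for all $n\in\omega$. *)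

(* Defs.v *)
From mathcomp Require Import all_boot.
Set Implicit Arguments. Unset Strict Implicit. Unset Printing Implicit Defensive.

(* Attributes f_i are identified with their index i : nat.
   A decision set (element of P(omega)) is represented canonically as a
   nonempty strictly increasing list of naturals. *)
Definition dec_set (s : seq nat) : bool := (s != [::]) && sorted ltn s.

(* A decision table: list of column attributes, list of rows; each row is
   (values, decision set). Row order matters (I keeps the first row). *)
Record table := Table { tcols : seq nat; trows : seq (seq nat * seq nat) }.

Definition Lambda : table := Table [::] [::].

Definition wf_table (k : nat) (T : table) : Prop :=
  uniq (tcols T) /\
  (tcols T = [::] <-> trows T = [::]) /\
  uniq (map fst (trows T)) /\
  (forall r, r \in trows T ->
     size r.1 = size (tcols T) /\ all (fun v => v < k) r.1 /\ dec_set r.2).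

Definition rval (T : table) (r : seq nat) (f : nat) : nat :=
  nth 0 r (index f (tcols T)).

Definition row_sat (T : table) (alpha : seq (nat * nat)) (r : seq nat) : bool :=
  all (fun p => rval T r p.1 == p.2) alpha.

Definition subtable (T : table) (alpha : seq (nat * nat)) : table :=
  let rs := filter (fun r => row_sat T alpha r.1) (trows T) in
  if rs is [::] then Lambda else Table (tcols T) rs.

Definition in_Pi (T : table) (d : nat) : bool :=
  all (fun r => d \in r.2) (trows T).

Definition keep_first (s : seq (seq nat * seq nat)) : seq (seq nat * seq nat) :=
  foldl (fun acc x => if x.1 \in map fst acc then acc else rcons acc x) [::] s.

Definition Iop (D : seq nat) (T : table) : table :=
  if all (fun f => f \in D) (tcols T) then Lambda else
  let nc := filter (fun f => f \notin D) (tcols T) in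
  Table nc (keep_first
    [seq ([seq rval T r.1 f | f <- nc], r.2) | r <- trows T]).

Definition Jop (nu : seq nat -> seq nat) (T : table) : table :=
  Table (tcols T) [seq (r.1, nu r.1) | r <- trows T].

Definition in_closure (T T' : table) : Prop :=
  exists (D : seq nat) (nu : seq nat -> seq nat),
    all (fun f => f \in tcols T) D /\ (forall x, dec_set (nu x)) /\
    T' = Jop nu (Iop D T).

Definition closed_class (k : nat) (A : table -> Prop) : Prop :=
  (exists T, A T) /\ (forall T, A T -> wf_table k T) /\
  (forall T', (exists T, A T /\ in_closure T T') <-> A T').

(* Non-root nodes: terminal nodes labeled with a decision, other nodes labeled
   with an attribute and outgoing edges labeled with numbers. *)
Inductive node := Leaf of nat | Node of nat & seq (nat * node).

(* A k-decision tree: an unlabeled root with a list of (unlabeled) edges to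
   subtrees. *)
Record dtree := DTree { droots : seq node }.

Fixpoint node_wf (k : nat) (t : node) : bool :=
  match t with
  | Leaf _ => true
  | Node _ ch => (size ch > 0) && all (fun p => p.1 < k) ch &&
                 all (fun p => node_wf k p.2) ch
  end.

Definition dtree_wf (k : nat) (G : dtree) : bool :=
  (size (droots G) > 0) && all (node_wf k) (droots G).

Fixpoint node_det (t : node) : bool :=
  match t with
  | Leaf _ => true
  | Node _ ch => uniq (map fst ch) && all (fun p => node_det p.2) ch
  end.

Fixpoint node_atts (t : node) : seq nat :=
  match t with
  | Leaf _ => [::]
  | Node f ch => f :: flatten (map (fun p => node_atts p.2) ch)
  end.

Definition dtree_atts (G : dtree) : seq nat := flatten (map node_atts (droots G)).

Fixpoint node_paths (t : node) : seq (seq (nat * nat) * nat) :=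
  match t with
  | Leaf d => [:: ([::], d)]
  | Node f ch =>
      flatten (map (fun p => map (fun wd => ((f, p.1) :: wd.1, wd.2))
                                 (node_paths p.2)) ch)
  end.

(* complete paths tau of G, as pairs (pi(tau), decision at terminal node) *)
Definition dtree_paths (G : dtree) : seq (seq (nat * nat) * nat) :=
  flatten (map node_paths (droots G)).

Definition nondet_tree (k : nat) (G : dtree) (T : table) : Prop :=
  T <> Lambda /\ dtree_wf k G /\
  all (fun f => f \in tcols T) (dtree_atts G) /\
  (forall r, r \in trows T ->
     exists2 tau, tau \in dtree_paths G & r \in trows (subtable T tau.1)) /\
  (forall tau, tau \in dtree_paths G ->
     subtable T tau.1 = Lambda \/ in_Pi (subtable T tau.1) tau.2).

Definition det_tree (k : nat) (G : dtree) (T : table) : Prop :=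
  nondet_tree k G T /\ size (droots G) = 1 /\ all node_det (droots G).

Definition partially_bounded_measure (psi : seq nat -> nat) : Prop :=
  (forall a, psi a = 0 <-> a = [::]) /\
  (forall a b, perm_eq a b -> psi a = psi b) /\
  (forall a b, psi a <= psi (a ++ b)) /\
  (forall a b, psi (a ++ b) <= psi a + psi b).

Definition bounded_measure (psi : seq nat -> nat) : Prop :=
  partially_bounded_measure psi /\ (forall a, size a <= psi a).

Definition psi_tree (psi : seq nat -> nat) (G : dtree) : nat :=
  \max_(tau <- dtree_paths G) psi (map fst tau.1).

Definition is_psi_d (k : nat) (psi : seq nat -> nat) (T : table) (m : nat) : Prop :=
  (T = Lambda /\ m = 0) \/
  (T <> Lambda /\ (exists G, det_tree k G T /\ psi_tree psi G = m) /\
   (forall G, det_tree k G T -> m <= psi_tree psi G)).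

Definition is_psi_a (k : nat) (psi : seq nat -> nat) (T : table) (m : nat) : Prop :=
  (T = Lambda /\ m = 0) \/
  (T <> Lambda /\ (exists G, nondet_tree k G T /\ psi_tree psi G = m) /\
   (forall G, nondet_tree k G T -> m <= psi_tree psi G)).

Definition H_set (k : nat) (psi : seq nat -> nat) (A : table -> Prop) (n m : nat)
  : Prop :=
  exists T, A T /\ (exists a, is_psi_a k psi T a /\ a <= n) /\ is_psi_d k psi T m.

(* H^infty_{psi,A}(n) is defined (the set is finite, i.e. bounded in nat) *)
Definition H_defined (k : nat) (psi : seq nat -> nat) (A : table -> Prop) (n : nat)
  : Prop := exists b, forall m, H_set k psi A n m -> m <= b.

Definition H_value (k : nat) (psi : seq nat -> nat) (A : table -> Prop) (n h : nat)
  : Prop :=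
  H_defined k psi A n /\ H_set k psi A n h /\
  (forall m, H_set k psi A n m -> m <= h).

Definition H_everywhere_defined (k : nat) (psi : seq nat -> nat)
  (A : table -> Prop) : Prop := forall n, H_defined k psi A n.

(* Main.v *)
Require Import Defs.
From mathcomp Require Import all_boot zify.
From Stdlib Require Import Classical.
Set Implicit Arguments. Unset Strict Implicit. Unset Printing Implicit Defensive.


Fixpoint node_ind' (P : node -> Prop) (HL : forall d, P (Leaf d))
  (HN : forall f ch, (forall v c, List.In (v, c) ch -> P c) -> P (Node f ch))
  (t : node) : P t :=
  match t with
  | Leaf d => HL d
  | Node f ch => HN f ch ((fix aux (s : seq (nat * node)) :
        forall v c, List.In (v, c) s -> P c :=
       match s with
       | [::] => fun v c H => match H with end
       | (v0, c0) :: s' => fun v c H => match H with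
                    | or_introl e => eq_ind c0 P (node_ind' HL HN c0) c
                                       (f_equal snd e)
                    | or_intror H' => aux s' v c H' end
       end) ch)
  end.

Lemma in_flatten_map (A : Type) (B : eqType) (F : A -> seq B) (s : seq A) (x : B) :
  x \in flatten (map F s) <-> exists a, List.In a s /\ x \in F a.
Proof.
elim: s => [|a s IH] /=; first by split => // -[? []].
rewrite mem_cat; split.
  case/orP => [h|/IH [b [hb hx]]]; [by exists a; auto | by exists b; auto].
move=> [b [[<-|hb] hx]]; first by rewrite hx.
by apply/orP; right; apply/IH; exists b.
Qed.

Lemma all_In (A : Type) (P : pred A) s a : all P s -> List.In a s -> P a.
Proof. elim: s => //= b s IH /andP [h1 h2] [<-|]; auto. Qed.

Lemma In_fst (A : eqType) (B : Type) (s : seq (A * B)) a b :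
  List.In (a, b) s -> a \in map fst s.
Proof. elim: s => //= [[x y] s IH] [e|h]; rewrite in_cons; apply/orP;
  [by left; case: e => -> | by right; auto]. Qed.

Lemma uniq_fst_In (A : eqType) (B : Type) (s : seq (A * B)) a b b' :
  uniq (map fst s) -> List.In (a, b) s -> List.In (a, b') s -> b = b'.
Proof.
elim: s => //= [[x y] s IH] /= /andP [hn hu] [e|h] [e'|h'].
- by case: e => _ <-; case: e' => _ <-.
- case: e => ex _; subst x; by rewrite (In_fst h') in hn.
- case: e' => ex _; subst x; by rewrite (In_fst h) in hn.
- exact: IH.
Qed.

Lemma node_paths_Node f ch w :
  w \in node_paths (Node f ch) <->
  exists v c w', List.In (v, c) ch /\ w' \in node_paths c /\ w = ((f, v) :: w'.1, w'.2).
Proof.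
rewrite /= in_flatten_map; split.
  move=> [[v c] [hin /mapP [w' hw' ->]]]; by exists v, c, w'.
move=> [v [c [w' [hin [hw' ->]]]]]; exists (v, c); split => //.
by apply/mapP; exists w'.
Qed.

Lemma paths_nonempty k t : node_wf k t -> node_paths t != [::].
Proof.
elim/node_ind': t => [d|f ch IH] //=.
case: ch IH => [|[v c] ch] IH //= /andP [/andP [_ _] /andP [hc _]].
have := IH v c (or_introl erefl) hc.
by case: (node_paths c).
Qed.

Lemma trows_subtable T w :
  trows (subtable T w) = filter (fun r => row_sat T w r.1) (trows T).
Proof. rewrite /subtable; by case: (filter _ _). Qed.

Lemma subtable_Lambda T w :
  subtable T w = Lambda <-> filter (fun r => row_sat T w r.1) (trows T) = [::].
Proof. rewrite /subtable; by case: (filter _ _). Qed.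

Lemma in_Pi_subtable T w d :
  in_Pi (subtable T w) d = all (fun r => d \in r.2) (filter (fun r => row_sat T w r.1) (trows T)).
Proof. by rewrite /in_Pi trows_subtable. Qed.

Lemma leaf_ok T w d :
  (forall r, r \in trows T -> row_sat T w r.1 -> d \in r.2) ->
  subtable T w = Lambda \/ in_Pi (subtable T w) d.
Proof.
move=> H; right; rewrite in_Pi_subtable; apply/allP => r.
rewrite mem_filter => /andP [h1 h2]; exact: H.
Qed.

Lemma row_sat_cat T p q r : row_sat T (p ++ q) r = row_sat T p r && row_sat T q r.
Proof. by rewrite /row_sat all_cat. Qed.

Lemma min_ex (P : nat -> Prop) : (exists n, P n) -> exists m, P m /\ forall n, P n -> m <= n.
Proof.
move=> [n Pn]; elim/ltn_ind: n Pn => n IH Pn.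
case: (classic (exists m, m < n /\ P m)) => [[m [hm Pm]]|H]; first exact: IH hm Pm.
exists n; split => // j Pj; rewrite leqNgt; apply/negP => hj; apply: H; by exists j.
Qed.

Lemma max_ex (P : nat -> Prop) B : (exists n, P n) -> (forall n, P n -> n <= B) ->
  exists m, P m /\ forall n, P n -> n <= m.
Proof.
move=> [n Pn] HB.
have [i [[Pi hi] Hi]] : exists i, (P (B - i) /\ i <= B) /\
     forall j, P (B - j) /\ j <= B -> i <= j.
  apply: (min_ex (P := fun i => P (B - i) /\ i <= B)). exists (B - n); rewrite subKn; last exact: HB; split => //; exact: leq_subr.
exists (B - i); split => // j Pj.
have hj := HB _ Pj.
have h2 : P (B - (B - j)) /\ B - j <= B by rewrite subKn //; split => //; exact: leq_subr.
have := Hi _ h2; lia.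
Qed.


Definition wt (f : nat) : nat := maxn 1 (logn 2 f).
Definition psi0 (s : seq nat) : nat := sumn (map wt s).
Definition attr (n j : nat) : nat := 2 ^ n * j.*2.+1.

Lemma wt_attr n j : 0 < n -> wt (attr n j) = n.
Proof.
move=> hn; rewrite /wt /attr mulnC logn_Gauss ?pfactorK //; first lia.
by rewrite coprime2n /= odd_double.
Qed.

Lemma attr_inj n : injective (attr n).
Proof.
move=> a b; rewrite /attr => /eqP; rewrite eqn_pmul2l ?expn_gt0 // => /eqP [].
lia.
Qed.

Lemma wt_gt0 f : 0 < wt f.
Proof. rewrite /wt; lia. Qed.

Lemma psi0_size s : size s <= psi0 s.
Proof. rewrite /psi0; elim: s => //= a s IH; have := wt_gt0 a; lia. Qed.

Lemma psi0_bounded : bounded_measure psi0.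
Proof.
split; last exact: psi0_size.
split; [|split; [|split]].
- move=> a; split; last by move->.
  case: a => //= x s; rewrite /psi0 /=; have := wt_gt0 x; lia.
- by move=> a b hp; apply: perm_sumn; apply: perm_map.
- by move=> a b; rewrite /psi0 map_cat sumn_cat leq_addr.
- by move=> a b; rewrite /psi0 map_cat sumn_cat.
Qed.

Lemma psi0_const s n : (forall f, f \in s -> wt f = n) -> psi0 s = n * size s.
Proof.
rewrite /psi0; elim: s => [|a s IH] H /=; first by rewrite muln0.
rewrite IH; last by move=> f hf; apply: H; rewrite in_cons hf orbT.
by rewrite H ?mem_head // mulnS.
Qed.


Lemma In_map_iff (A : Type) (B : Type) (g : A -> B) s y :
  List.In y (map g s) <-> exists x, List.In x s /\ g x = y.
Proof.
elim: s => [|a s IH] /=; first by split => // -[? []].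
split.
  case=> [<-|/IH [x [h1 h2]]]; [by exists a; auto| by exists x; auto].
move=> [x [[<-|h1] h2]]; [by left | right; apply/IH; by exists x].
Qed.

Lemma In_mem (A : eqType) (s : seq A) x : List.In x s <-> x \in s.
Proof.
elim: s => [|a s IH] //=; rewrite in_cons; split.
  by case=> [->|/IH ->]; rewrite ?eqxx ?orbT.
by case/orP => [/eqP ->|/IH]; auto.
Qed.

Fixpoint full (k : nat) (cs : seq nat) (pre : seq (nat * nat))
    (dec : seq (nat * nat) -> nat) : node :=
  match cs with
  | [::] => Leaf (dec pre)
  | c :: cs' => Node c [seq (x, full k cs' (pre ++ [:: (c, x)]) dec) | x <- iota 0 k]
  end.

Lemma full_wf k cs pre dec : 0 < k -> node_wf k (full k cs pre dec).
Proof.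
move=> hk; elim: cs pre => [|c cs IH] pre //=.
rewrite size_map size_iota hk /= !all_map; apply/andP; split.
  by apply/allP => y hy /=; rewrite mem_iota in hy.
by apply/allP => y hy /=.
Qed.

Lemma full_det k cs pre dec : node_det (full k cs pre dec).
Proof.
elim: cs pre => [|c cs IH] pre //=.
rewrite -map_comp /= map_id iota_uniq /=.
by rewrite all_map; apply/allP => y hy /=.
Qed.

Lemma full_atts k cs pre dec f : f \in node_atts (full k cs pre dec) -> f \in cs.
Proof.
elim: cs pre => [|c cs IH] pre //=.
rewrite !in_cons => /orP [->//|].
move/(in_flatten_map (fun p => node_atts p.2)) => [[x t] [hin hf]].
move: hin => /In_map_iff [y [_ [_ ht]]]; subst t; rewrite /= in hf.
by rewrite (IH _ hf) orbT.
Qed.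

Lemma full_paths k cs pre dec tau : tau \in node_paths (full k cs pre dec) ->
  map fst tau.1 = cs /\ tau.2 = dec (pre ++ tau.1).
Proof.
elim: cs pre tau => [|c cs IH] pre tau.
  by rewrite /= inE => /eqP -> /=; rewrite cats0.
move/node_paths_Node => [v [t [w' [hin [hw' ->]]]]].
move: hin => /In_map_iff [y [_ [ey ht]]]; subst v t.
have [h1 h2] := IH _ _ hw'.
by rewrite /= h1 h2 -catA.
Qed.

Lemma full_cover k cs pre dec (val : nat -> nat) :
  (forall c, c \in cs -> val c < k) ->
  ([seq (c, val c) | c <- cs], dec (pre ++ [seq (c, val c) | c <- cs]))
    \in node_paths (full k cs pre dec).
Proof.
elim: cs pre => [|c cs IH] pre H.
  by rewrite /= cats0 inE.
apply/node_paths_Node; exists (val c), (full k cs (pre ++ [:: (c, val c)]) dec).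
exists ([seq (c, val c) | c <- cs], dec ((pre ++ [:: (c, val c)]) ++ [seq (c, val c) | c <- cs])).
split; [|split].
- apply/In_map_iff; exists (val c); split => //; apply/In_mem.
  by rewrite mem_iota add0n H ?mem_head.
- by apply: IH => c' hc'; apply: H; rewrite in_cons hc' orbT.
- by rewrite /= -catA.
Qed.

Definition dist (T : table) (cs : seq nat) := forall r1 r2, r1 \in trows T -> r2 \in trows T ->
  (forall c, c \in cs -> rval T r1.1 c = rval T r2.1 c) -> r1 = r2.

Definition decT (T : table) (w : seq (nat * nat)) : nat :=
  head 0 (head ([::], [::]) (filter (fun r => row_sat T w r.1) (trows T))).2.

Lemma dtree_paths1 t : dtree_paths (DTree [:: t]) = node_paths t.
Proof. by rewrite /dtree_paths /= cats0. Qed.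

Lemma rval_lt k T r c : wf_table k T -> r \in trows T -> c \in tcols T -> rval T r.1 c < k.
Proof.
move=> [_ [_ [_ H]]] hr hc; have [hs [ha _]] := H r hr.
rewrite /rval; have hi : index c (tcols T) < size r.1 by rewrite hs index_mem.
by move/allP: ha; apply; apply: mem_nth.
Qed.

Lemma full_det_tree k T cs : 0 < k -> T <> Lambda -> wf_table k T ->
  {subset cs <= tcols T} -> dist T cs ->
  det_tree k (DTree [:: full k cs [::] (decT T)]) T.
Proof.
move=> hk hT hwf hcs hd.
split; last by rewrite /= full_det.
split => //; split; first by rewrite /dtree_wf /= full_wf.
split.
  apply/allP => f; rewrite /dtree_atts /= cats0 => /full_atts; exact: hcs.
split.
  move=> r hr; exists ([seq (c, rval T r.1 c) | c <- cs],
     decT T ([::] ++ [seq (c, rval T r.1 c) | c <- cs])).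
    rewrite dtree_paths1; apply: full_cover => c hc; apply: rval_lt hwf hr (hcs _ hc).
  rewrite trows_subtable mem_filter hr andbT /row_sat all_map.
  by apply/allP => c _ /=.
move=> tau; rewrite dtree_paths1 => /full_paths [h1 h2].
case hF: (filter (fun r => row_sat T tau.1 r.1) (trows T)) => [|r0 F].
  by left; apply/subtable_Lambda.
have : r0 \in filter (fun r => row_sat T tau.1 r.1) (trows T) by rewrite hF mem_head.
rewrite mem_filter => /andP [s0 hr0].
apply: leaf_ok => r hr sr.
have -> : r = r0.
  apply: hd => // c; rewrite -h1 => /mapP [[c' v] hcv /= ->].
  move/allP: sr => /(_ _ hcv) /eqP ->.
  by move/allP: s0 => /(_ _ hcv) /eqP ->.
rewrite h2 /decT /= hF /=.
have [_ [_ [_ H]]] := hwf; have [_ [_ hds]] := H r0 hr0.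
by move: hds; rewrite /dec_set; case: (r0.2) => //= a s _; rewrite mem_head.
Qed.

Lemma full_psi k cs pre dec n : (forall c, c \in cs -> wt c = n) ->
  psi_tree psi0 (DTree [:: full k cs pre dec]) <= n * size cs.
Proof.
move=> H; rewrite /psi_tree dtree_paths1; apply/bigmax_leqP_seq => tau htau _.
have [h1 _] := full_paths htau; by rewrite h1 (psi0_const H).
Qed.


Lemma map_rval T r : size r = size (tcols T) -> uniq (tcols T) ->
  map (rval T r) (tcols T) = r.
Proof.
move=> hs hu; rewrite /rval.
set cs := tcols T in hs hu *.
have e : cs = map (nth 0 cs) (iota 0 (size cs)) by rewrite -/(mkseq _ _) mkseq_nth.
rewrite [in X in map _ X]e -map_comp.
rewrite -[RHS](mkseq_nth 0 r) /mkseq -hs.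
apply/eq_in_map => i; rewrite mem_iota add0n /= => hi.
by rewrite index_uniq // -hs.
Qed.

Lemma wf_rows k T : wf_table k T -> T <> Lambda -> trows T <> [::].
Proof.
case: T => c rs [_ [h _]] /= hT hr; apply: hT; subst rs.
by have := proj2 h erefl => /= ->.
Qed.

Lemma dist_cols k T : wf_table k T -> dist T (tcols T).
Proof.
move=> hwf r1 r2 h1 h2 H.
have [hu [_ [hu2 Hr]]] := hwf.
have e : r1.1 = r2.1.
  rewrite -(map_rval (proj1 (Hr _ h1)) hu) -(map_rval (proj1 (Hr _ h2)) hu).
  by apply/eq_in_map.
move: hu2 h1 h2 e; elim: (trows T) => //= a s IH /andP [ha hs].
rewrite !in_cons => /orP [/eqP->|h1] /orP [/eqP->|h2] e //.
- by move: ha; rewrite e; move/negP; case; apply/mapP; exists r2.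
- by move: ha; rewrite -e; move/negP; case; apply/mapP; exists r1.
- exact: IH.
Qed.

Lemma leaf_tree k T d : T <> Lambda -> in_Pi T d ->
  det_tree k (DTree [:: Leaf d]) T /\ psi_tree psi0 (DTree [:: Leaf d]) = 0.
Proof.
move=> hT hP; split; last by rewrite /psi_tree dtree_paths1 /= big_cons big_nil.
split => //; split => //; split => //; split => //.
split.
  move=> r hr; exists ([::], d); first by rewrite dtree_paths1 inE.
  by rewrite trows_subtable mem_filter hr.
move=> tau; rewrite dtree_paths1 inE => /eqP -> /=; apply: leaf_ok => r hr _.
by move/allP: hP; apply.
Qed.

Lemma psi_a_lb k T G n : wf_table k T -> T <> Lambda -> ~ (exists d, in_Pi T d) ->
  nondet_tree k G T -> (forall c, c \in tcols T -> wt c = n) -> n <= psi_tree psi0 G.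
Proof.
move=> hwf hT hnP [_ [_ [hat [hcov hleaf]]]] hw.
have := wf_rows hwf hT; case hr: (trows T) => [|r rs] // _.
have hrm : r \in trows T by rewrite hr mem_head.
have [tau htau hrt] := hcov r hrm.
case e: tau.1 => [|x w].
  case: (hleaf _ htau) => [/subtable_Lambda|]; rewrite e.
    by move=> hF; move: hrt; rewrite trows_subtable e hF.
  rewrite in_Pi_subtable => hP; exfalso; apply: hnP; exists tau.2.
  move: hP; rewrite /in_Pi; congr (all _ _).
  by rewrite -{2}(filter_predT (trows T)); apply: eq_filter => ?; rewrite /row_sat.
have hx : x.1 \in dtree_atts G.
  move: htau => /(in_flatten_map node_paths) [t [ht htp]].
  apply/(in_flatten_map node_atts); exists t; split => //.
  case: t ht htp => [d|f ch] _ /=.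
    by rewrite inE => /eqP et; rewrite et in e.
  move/node_paths_Node => [v [c [w' [_ [_ et]]]]]; rewrite et /= in e.
  by case: e => <- _; rewrite mem_head.
have hxc : x.1 \in tcols T by move/allP: hat; apply.
have := @leq_bigmax_seq _ (dtree_paths G) xpredT (fun tau => psi0 (map fst tau.1)) _ htau erefl.
apply: leq_trans; rewrite e /= /psi0 /= (hw _ hxc); exact: leq_addr.
Qed.


Definition kf_step (acc : seq (seq nat * seq nat)) (x : seq nat * seq nat) :=
  if x.1 \in map fst acc then acc else rcons acc x.

Lemma kf_uniq s acc : uniq (map fst acc) -> uniq (map fst (foldl kf_step acc s)).
Proof.
elim: s acc => //= x s IH acc hu; apply: IH; rewrite /kf_step.
case: ifP => // hx; by rewrite map_rcons rcons_uniq hx.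
Qed.

Lemma kf_mem s acc y : y \in foldl kf_step acc s -> y \in acc \/ y \in s.
Proof.
elim: s acc => /= [|x s IH] acc; first by left.
move/IH; rewrite /kf_step in_cons => -[|h]; last by right; rewrite h orbT.
case: ifP => _ h; first by left.
move: h; rewrite mem_rcons in_cons => /orP [->|->]; auto.
Qed.

Lemma kf_id s acc : uniq (map fst (acc ++ s)) -> foldl kf_step acc s = acc ++ s.
Proof.
elim: s acc => /= [|x s IH] acc hu; first by rewrite cats0.
rewrite /kf_step; have := hu; rewrite map_cat /= cat_uniq /= => /and3P [_ /norP [hx _] _].
have hx' : (x.1 \in map fst acc) = false by apply/negbTE.
rewrite hx' IH -?cats1 -?catA //.
Qed.

Lemma kf_size s acc : size acc <= size (foldl kf_step acc s).
Proof.
elim: s acc => //= y s IH acc; apply: leq_trans (IH _).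
rewrite /kf_step; case: ifP => // _; by rewrite size_rcons.
Qed.

Lemma kf_def s : keep_first s = foldl kf_step [::] s.
Proof. by []. Qed.

Lemma kf_nonempty s : s != [::] -> keep_first s != [::].
Proof.
case: s => // x s _; rewrite kf_def /=.
have e : kf_step [::] x = [:: x] by rewrite /kf_step in_nil.
have := kf_size s (kf_step [::] x); rewrite e.
by case: (foldl _ _ _).
Qed.

Lemma sumn_split (A : Type) (g : A -> nat) (P : pred A) s :
  sumn (map g s) = sumn (map g (filter P s)) + sumn (map g (filter (predC P) s)).
Proof. elim: s => //= a s ->; case: (P a) => /=; lia. Qed.

Lemma filter_notin_nil (D s : seq nat) :
  filter (fun f => f \notin D) s = [::] -> all (fun f => f \in D) s.
Proof. elim: s => //= a s IH; case: ifP => // /negbFE -> /IH ->. done. Qed.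

Lemma nth_snd (s : seq (seq nat * seq nat)) r d :
  uniq (map fst s) -> r \in s -> nth d (map snd s) (index r.1 (map fst s)) = r.2.
Proof.
elim: s => //= a s IH /andP [ha hu]; rewrite in_cons => /orP [/eqP ->|hr].
  by rewrite eqxx.
case: eqP => [e|_]; last exact: IH.
by move: ha; rewrite e (map_f fst hr).
Qed.

Definition mm (phi : nat -> nat) (n : nat) : nat := locked ((phi n + n - 1) %/ n).+1.
Definition Cn phi n : seq nat := map (attr n) (iota 0 (mm phi n)).

Definition Pn phi n (T : table) : Prop :=
  all (fun c => c \in Cn phi n) (tcols T) /\
  forall r, r \in trows T -> sumn r.1 <= 1 /\ (size (tcols T) = mm phi n -> sumn r.1 = 1).

Definition AA k phi (T : table) : Prop := wf_table k T /\ exists n, 0 < n /\ Pn phi n T.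

Lemma AA_Lambda k phi : AA k phi Lambda.
Proof.
split; first by split => //; split.
by exists 1; split => //; split.
Qed.

Lemma size_cols_le k phi n T : wf_table k T -> Pn phi n T -> size (tcols T) <= mm phi n.
Proof.
move=> [hu _] [hc _]; have := uniq_leq_size hu (allP hc).
by rewrite size_map size_iota.
Qed.

Lemma AA_closed k phi T D nu : AA k phi T -> (forall x, dec_set (nu x)) ->
  AA k phi (Jop nu (Iop D T)).
Proof.
move=> [hwf [n [hn [hc hpr]]]] hnu.
rewrite /Iop; case: ifP => hall; first exact: AA_Lambda.
set nc := filter _ _.
set L := map _ _.
have hu := proj1 hwf.
have [_ [hiff [hu2 Hr]]] := hwf.
have hnc : nc != [::].
  by apply/eqP => e; move: hall; rewrite (filter_notin_nil e).
have hcols : tcols T != [::] by move: hnc; rewrite /nc; case: (tcols T).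
have hrows : trows T != [::].
  by apply/eqP => e; move: hcols; rewrite (proj2 hiff e).
have hL : L != [::] by rewrite /L; case: (trows T) hrows.
have hK := kf_nonempty hL.
have hsub : {subset nc <= tcols T} by move=> c; rewrite mem_filter => /andP [].
have Hrow : forall x y, (x, y) \in keep_first L ->
    exists r, r \in trows T /\ x = map (rval T r.1) nc.
  move=> x y /kf_mem [//|/mapP [r hr [-> _]]]; by exists r.
split.
  split; first exact: filter_uniq.
  split.
    split => /= e; [by rewrite e in hnc | by move: hK; case: (keep_first L) e].
  split; first by rewrite /= -map_comp /=; apply: kf_uniq.
  move=> r' /= /mapP [[x y] hxy ->] /=.
  have [r [hr ->]] := Hrow _ _ hxy.
  split; first by rewrite size_map.
  split; last exact: hnu.
  apply/allP => v /mapP [c hcnc ->]; exact: rval_lt hwf hr (hsub _ hcnc).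
exists n; split => //; split.
  apply/allP => c hcnc; move/allP: hc; apply; exact: hsub.
move=> r' /= /mapP [[x y] hxy ->] /=.
have [r [hr ->]] := Hrow _ _ hxy.
have [hs1 hs2] := hpr _ hr.
have hsr := map_rval (proj1 (Hr _ hr)) hu.
have sp := sumn_split (rval T r.1) (fun f => f \notin D) (tcols T).
rewrite hsr -/nc in sp.
split; first by lia.
move=> hm.
have hle := size_cols_le hwf (conj hc hpr).
have hsz := size_filter (fun f => f \notin D) (tcols T).
have hcp := count_predC (fun f => f \notin D) (tcols T).
have : size (filter (predC (fun f => f \notin D)) (tcols T)) = 0.
  rewrite size_filter; move: hsz; rewrite -/nc => h; rewrite h in hm; rewrite -hcp in hle.
  move: hle; rewrite -hm; lia.
move/size0nil => e; rewrite e /= in sp.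
have : size (tcols T) = mm phi n.
  apply/eqP; rewrite eqn_leq hle -hm /nc size_filter; exact: count_size.
move/hs2 => h; by rewrite -h sp addn0.
Qed.

Lemma table_eta T : T = Table (tcols T) (trows T).
Proof. by case: T. Qed.

Lemma self_closure k T : wf_table k T -> in_closure T T.
Proof.
move=> hwf; have [hu [hiff [hu2 Hr]]] := hwf.
pose nu := fun x => nth [:: 0] (map snd (trows T)) (index x (map fst (trows T))).
exists [::], nu; split => //; split.
  move=> x; rewrite /nu; case: (ltnP (index x (map fst (trows T))) (size (map snd (trows T)))) => h.
    have := mem_nth [:: 0] h => /mapP [r hr ->]; exact: (proj2 (proj2 (Hr _ hr))).
  by rewrite nth_default.
rewrite /Iop; case: ifP => hall.
  have e : tcols T = [::] by move: hall; case: (tcols T).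
  by rewrite {1}(table_eta T) e (proj1 hiff e).
have -> : filter (fun f => f \notin [::]) (tcols T) = tcols T.
  by rewrite -{2}(filter_predT (tcols T)); apply: eq_filter.
have -> : [seq ([seq rval T r.1 f | f <- tcols T], r.2) | r <- trows T] = trows T.
  rewrite -{2}(map_id (trows T)); apply/eq_in_map => r hr /=.
  by rewrite map_rval ?(proj1 (Hr _ hr)) //; case: r {hr}.
rewrite kf_def kf_id //=.
rewrite {1}(table_eta T) /Jop /=; congr Table.
rewrite -{1}(map_id (trows T)); apply/eq_in_map => r hr /=.
by rewrite /nu nth_snd //; case: r {hr}.
Qed.

Lemma AA_closed_class k phi : closed_class k (AA k phi).
Proof.
split; first by exists Lambda; exact: AA_Lambda.
split; first by move=> T [].
move=> T'; split.
  move=> [T [hA [D [nu [_ [hnu ->]]]]]]; exact: AA_closed.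
move=> hA; exists T'; split => //; apply: self_closure (proj1 hA).
Qed.


Definition unitv (m j : nat) : seq nat := map (fun i => nat_of_bool (i == j)) (iota 0 m).
Definition UT phi n : table :=
  Table (Cn phi n) (map (fun j => (unitv (mm phi n) j, [:: j])) (iota 0 (mm phi n))).

Lemma index_Cn phi n i : i < mm phi n -> index (attr n i) (Cn phi n) = i.
Proof.
move=> hi; rewrite /Cn index_map; last exact: attr_inj.
have := @index_uniq _ 0 i (iota 0 (mm phi n)); rewrite size_iota nth_iota // add0n.
by move=> -> //; exact: iota_uniq.
Qed.

Lemma rval_UT phi n i j : i < mm phi n ->
  rval (UT phi n) (unitv (mm phi n) j) (attr n i) = (i == j).
Proof.
move=> hi; rewrite /rval -[tcols (UT phi n)]/(Cn phi n) index_Cn // /unitv (nth_map 0) ?size_iota // nth_iota //.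
Qed.

Lemma mem_Cn phi n c : c \in Cn phi n -> exists2 i, i < mm phi n & c = attr n i.
Proof. by move/mapP => [i hi ->]; exists i => //; move: hi; rewrite mem_iota. Qed.

Lemma wt_Cn phi n c : 0 < n -> c \in Cn phi n -> wt c = n.
Proof. by move=> hn /mem_Cn [i _ ->]; rewrite wt_attr. Qed.

Lemma paths_atts t w : w \in node_paths t -> {subset map fst w.1 <= node_atts t}.
Proof.
elim/node_ind': t w => [d|f ch IH] w.
  by rewrite /= inE => /eqP -> .
move/node_paths_Node => [v [c [w' [hin [hw' ->]]]]] x.
rewrite /= in_cons => /orP [/eqP ->|hx]; first by rewrite mem_head.
rewrite in_cons; apply/orP; right.
apply/(in_flatten_map (fun p => node_atts p.2)); exists (v, c); split => //.
exact: IH hin _ hw' _ hx.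
Qed.

Lemma sumn_unitv m j : j < m -> sumn (unitv m j) = 1.
Proof.
move=> hj; rewrite /unitv sumn_count.
rewrite (eq_count (a2 := pred1 j)); last by move=> i /=; rewrite eq_sym.
by rewrite count_uniq_mem ?iota_uniq // mem_iota hj.
Qed.

Lemma unitv_inj m : {in gtn m &, injective (unitv m)}.
Proof.
move=> a b ha hb e.
have : nth 0 (unitv m a) a = nth 0 (unitv m b) a by rewrite e.
rewrite /unitv !(nth_map 0) ?size_iota // !nth_iota // add0n eqxx.
by case: eqP.
Qed.

Lemma mm_facts phi n : 0 < n -> n <= phi n ->
  [/\ 2 <= mm phi n, phi n <= n * (mm phi n).-1 & n * (mm phi n).-1 <= phi n + n - 1].
Proof.
move=> hn hp; rewrite /mm -lock /=.
have e := divn_eq (phi n + n - 1) n.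
have hr := ltn_pmod (phi n + n - 1) hn.
set q := (phi n + n - 1) %/ n in e *.
set r := (phi n + n - 1) %% n in e hr.
rewrite mulnC.
have hq : 0 < q.
  case: q e => [|q'] e //; rewrite mul0n add0n in e; lia.
split; lia.
Qed.

Lemma UT_AA k phi n : 1 < k -> 0 < n -> n <= phi n -> AA k phi (UT phi n).
Proof.
move=> hk hn hp; have [hm _ _] := mm_facts hn hp.
set m := mm phi n.
split.
  split; first by change (uniq (Cn phi n)); rewrite /Cn (map_inj_uniq (@attr_inj n)) iota_uniq.
  split.
    by rewrite /= /Cn /m; case: (mm phi n) hm.
  split.
    rewrite /= -map_comp /= map_inj_in_uniq ?iota_uniq //.
    move=> a b; rewrite !mem_iota /= => ha hb; apply: unitv_inj; rewrite /= ?inE; lia.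
  move=> r /mapP [j hj ->] /=; rewrite mem_iota in hj.
  split; first by rewrite /unitv /Cn !size_map.
  split => //.
  apply/allP => v /mapP [i _ ->]; case: (i == j) => /=; lia.
exists n; split => //; split.
  by apply/allP => c /=.
move=> r /mapP [j hj ->] /=; rewrite mem_iota in hj.
by rewrite sumn_unitv //; lia.
Qed.

Definition G0 phi n : dtree :=
  DTree (map (fun j => Node (attr n j) [:: (1, Leaf j)]) (iota 0 (mm phi n))).

Lemma G0_paths phi n tau : tau \in dtree_paths (G0 phi n) ->
  exists2 i, i < mm phi n & tau = ([:: (attr n i, 1)], i).
Proof.
move/(in_flatten_map node_paths) => [t [/In_map_iff [i [hi <-]] ht]].
move/In_mem: hi; rewrite mem_iota add0n => hi.
exists i => //; move: ht; rewrite /= inE => /eqP ->; done.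
Qed.

Lemma UT_ne phi n : 0 < n -> n <= phi n -> UT phi n <> Lambda.
Proof.
move=> hn hp; have [hm _ _] := mm_facts hn hp.
by rewrite /UT /Cn; case: (mm phi n) hm.
Qed.

Lemma G0_nondet k phi n : 1 < k -> 0 < n -> n <= phi n -> nondet_tree k (G0 phi n) (UT phi n).
Proof.
move=> hk hn hp; have [hm _ _] := mm_facts hn hp.
split; first exact: UT_ne.
split.
  rewrite /dtree_wf /= size_map size_iota all_map; apply/andP; split; first lia.
  by apply/allP => j _ /=; rewrite hk.
split.
  apply/allP => f /(in_flatten_map node_atts) [t [/In_map_iff [i [hi <-]]]].
  move/In_mem: hi; rewrite mem_iota add0n /= inE => hi /eqP ->.
  by apply/mapP; exists i; rewrite // mem_iota.
split.
  move=> r /mapP [j hj ->]; move: hj; rewrite mem_iota add0n => hj.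
  exists ([:: (attr n j, 1)], j).
    apply/(in_flatten_map node_paths); exists (Node (attr n j) [:: (1, Leaf j)]).
    split; first by apply/In_map_iff; exists j; split => //; apply/In_mem; rewrite mem_iota.
    by rewrite /= inE.
  rewrite trows_subtable mem_filter /row_sat /= rval_UT // eqxx /=.
  by apply/mapP; exists j; rewrite // mem_iota.
move=> tau /G0_paths [i hi ->]; apply: leaf_ok => r /mapP [j hj ->].
rewrite /row_sat /= rval_UT // andbT inE.
by case: (i == j).
Qed.

Lemma G0_psi phi n : 0 < n -> psi_tree psi0 (G0 phi n) <= n.
Proof.
move=> hn; rewrite /psi_tree; apply/bigmax_leqP_seq => tau /G0_paths [i hi ->] _.
by rewrite /psi0 /= wt_attr // addn0.
Qed.

Lemma UT_psi_a k phi n : 1 < k -> 0 < n -> n <= phi n ->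
  exists a, is_psi_a k psi0 (UT phi n) a /\ a <= n.
Proof.
move=> hk hn hp.
have [a [[G [hG e]] Hmin]] := min_ex (P := fun a => exists G, nondet_tree k G (UT phi n) /\ psi_tree psi0 G = a)
   (ex_intro _ _ (ex_intro _ _ (conj (G0_nondet hk hn hp) erefl))).
exists a; split.
  right; split; first exact: UT_ne.
  split; first by exists G.
  by move=> G' hG'; apply: Hmin; exists G'.
apply: leq_trans (G0_psi phi hn); apply: Hmin; exists (G0 phi n); split => //; exact: G0_nondet.
Qed.


Definition good n (p : seq (nat * nat)) (j : nat) : bool := attr n j \notin map fst p.

Lemma count_good_le n m p : m <= count (good n p) (iota 0 m) + size p.
Proof.
have hc := count_predC (good n p) (iota 0 m); rewrite size_iota in hc.
suff : count (predC (good n p)) (iota 0 m) <= size p by lia.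
rewrite -size_filter -(size_map (attr n)) -(size_map fst p).
apply: uniq_leq_size.
  rewrite map_inj_uniq; [exact: filter_uniq (iota_uniq _ _) | exact: attr_inj].
move=> f /mapP [j]; rewrite mem_filter /= /good negbK => /andP [h _] ->; exact: h.
Qed.

Lemma good_cat n p q j : good n (p ++ q) j -> good n p j.
Proof. by rewrite /good map_cat mem_cat negb_or => /andP []. Qed.

Lemma path_ex k t : node_wf k t -> exists w, w \in node_paths t.
Proof.
move/paths_nonempty; case: (node_paths t) => // w ws _; exists w; exact: mem_head.
Qed.

Lemma adv k phi n (t : node) : 0 < n ->
  node_wf k t -> node_det t -> {subset node_atts t <= Cn phi n} ->
  forall p,
  (forall j, j < mm phi n -> row_sat (UT phi n) p (unitv (mm phi n) j) = good n p j) ->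
  (forall r, r \in trows (UT phi n) -> row_sat (UT phi n) p r.1 ->
     exists2 w, w \in node_paths t & row_sat (UT phi n) (p ++ w.1) r.1) ->
  (forall w, w \in node_paths t -> subtable (UT phi n) (p ++ w.1) = Lambda \/
                                   in_Pi (subtable (UT phi n) (p ++ w.1)) w.2) ->
  exists2 w, w \in node_paths t & count (good n (p ++ w.1)) (iota 0 (mm phi n)) <= 1.
Proof.
move=> hn; set m := mm phi n; set T := UT phi n.
elim/node_ind': t => [d|f ch IH] hwf hdet hat p Hinv H1 H2.
all: case: (leqP (count (good n p) (iota 0 m)) 1) => hc.
1,3: have [w hw] := path_ex hwf;
     exists w => //; apply: leq_trans hc; apply: sub_count => j; exact: good_cat.
all: have : 1 < size (filter (good n p) (iota 0 m)) by rewrite size_filter.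
all: have := filter_uniq (good n p) (iota_uniq 0 m).
all: have hmem : forall j, j \in filter (good n p) (iota 0 m) -> j < m /\ good n p j
       by move=> j; rewrite mem_filter mem_iota add0n => /andP [g /andP [_ h]].
all: case: (filter _ _) hmem => [|j1 [|j2 s]] hmem //= /andP [hj12 _] _.
all: have [hj1 g1] := hmem j1 (mem_head _ _).
all: have hm2 : j2 \in [:: j1, j2 & s] by rewrite in_cons mem_head orbT.
all: have [hj2 g2] := hmem j2 hm2.
all: have hne : j1 != j2 by move: hj12; rewrite in_cons negb_or => /andP [].
-
  exfalso; have := H2 ([::], d); rewrite inE eqxx cats0 => /(_ isT).
  have hr1 : (unitv m j1, [:: j1]) \in trows T by apply/mapP; exists j1; rewrite ?mem_iota.
  have hr2 : (unitv m j2, [:: j2]) \in trows T by apply/mapP; exists j2; rewrite ?mem_iota.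
  have s1 : row_sat T p (unitv m j1) by rewrite Hinv.
  have s2 : row_sat T p (unitv m j2) by rewrite Hinv.
  case=> [/subtable_Lambda hF|].
    by have := mem_filter (fun r => row_sat T p r.1) (unitv m j1, [:: j1]) (trows T);
       rewrite hF in_nil /= s1 hr1.
  rewrite in_Pi_subtable => /allP hP.
  have := hP (unitv m j1, [:: j1]); rewrite mem_filter s1 hr1 inE => /(_ isT) /eqP e1.
  have := hP (unitv m j2, [:: j2]); rewrite mem_filter s2 hr2 inE => /(_ isT) /eqP e2.
  by move: hne; rewrite -e1 -e2 eqxx.
have [i hi ef] := mem_Cn (hat _ (mem_head _ _)); subst f.
pose j := if j1 == i then j2 else j1.
have hj : j < m by rewrite /j; case: ifP.
have gj : good n p j by rewrite /j; case: ifP.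
have hji : (i == j) = false.
  rewrite /j; case: ifP => [/eqP e|/negbT h]; last by rewrite eq_sym; apply/negbTE.
  by rewrite -e; apply/negbTE; exact: hne.
have hrj : (unitv m j, [:: j]) \in trows T by apply/mapP; exists j; rewrite ?mem_iota.
have sj : row_sat T p (unitv m j) by rewrite Hinv.
have [w hw sw] := H1 _ hrj sj.
move: hw => /node_paths_Node [v [c [w' [hin [hw' ew]]]]].
move: sw; rewrite ew row_sat_cat /= {1}/row_sat /= rval_UT // hji => /andP [_ /andP [hv sw']].
have ev : v = 0 by move/eqP: hv.
subst v.
move: hwf hdet => /= /andP [/andP [_ _] hwfs] /andP [hu hdets].
have hwfc := all_In hwfs hin; have hdc := all_In hdets hin.
have hatc : {subset node_atts c <= Cn phi n}.
  move=> g hg; apply: hat; rewrite in_cons; apply/orP; right.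
  by apply/(in_flatten_map (fun p => node_atts p.2)); exists (0, c).
have := IH 0 c hin hwfc hdc hatc (p ++ [:: (attr n i, 0)]).
case.
- move=> j' hj'; rewrite row_sat_cat Hinv // /good map_cat mem_cat negb_or /=.
  rewrite rval_UT // andbT inE.
  congr (_ && _); rewrite (inj_eq (@attr_inj n)) [j' == i]eq_sym; by case: (i == j').
- move=> r hr; rewrite row_sat_cat => /andP [sp sf].
  have [w2 hw2 sw2] := H1 _ hr sp.
  move: hw2 => /node_paths_Node [v2 [c2 [w3 [hin2 [hw3 ew2]]]]].
  move: sw2; rewrite ew2 row_sat_cat /= {1}/row_sat /= => /andP [_ /andP [hv2 sw3]].
  move: sf; rewrite /row_sat /= andbT => /eqP hv0.
  have e2 : v2 = 0 by rewrite -(eqP hv2) hv0.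
  subst v2; have ec := uniq_fst_In hu hin hin2; subst c2.
  exists w3 => //; move: sp sw3; rewrite /row_sat !all_cat /= hv0 eqxx /= => -> ->; done.
- move=> w3 hw3; rewrite -catA /=.
  apply: (H2 ((attr n i, 0) :: w3.1, w3.2)).
  by apply/node_paths_Node; exists 0, c, w3.
move=> w3 hw3 hcnt; exists ((attr n i, 0) :: w3.1, w3.2).
  by apply/node_paths_Node; exists 0, c, w3.
by rewrite /= -cat1s catA.
Qed.

Lemma UT_det_lb k phi n G : 0 < n -> n <= phi n -> det_tree k G (UT phi n) ->
  phi n <= psi_tree psi0 G.
Proof.
move=> hn hp [[_ [hwf [hat [hcov hleaf]]]] [hs hdet]].
have [hm hlo hhi] := mm_facts hn hp.
case: G hwf hat hcov hleaf hs hdet => [[|t [|t' ts]]] //= hwf hat hcov hleaf _ hdet.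
rewrite dtree_paths1 in hcov hleaf *.
move: hwf hdet; rewrite /dtree_wf /= !andbT => hwf hdet.
have hatt : {subset node_atts t <= Cn phi n}.
  move=> f hf; move/allP: hat; apply; by rewrite /dtree_atts /= cats0.
have H1 : forall r, r \in trows (UT phi n) -> row_sat (UT phi n) [::] r.1 ->
     exists2 w, w \in node_paths t & row_sat (UT phi n) ([::] ++ w.1) r.1.
  move=> r hr _; have [tau ht hrt] := hcov r hr; exists tau => //.
  by move: hrt; rewrite trows_subtable mem_filter => /andP [].
have [w hw hc] := adv hn hwf hdet hatt (p := [::]) (fun j _ => erefl) H1 hleaf.
rewrite /= in hc.
have hsz := count_good_le n (mm phi n) w.1.
have hpsi : psi0 (map fst w.1) = n * size w.1.
  rewrite (@psi0_const _ n) ?size_map // => f hf; apply: wt_Cn hn _; exact: hatt (paths_atts hw hf).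
have := @leq_bigmax_seq _ (node_paths t) xpredT (fun tau => psi0 (map fst tau.1)) _ hw erefl.
rewrite /psi_tree dtree_paths1 hpsi.
move=> h; apply: leq_trans h; apply: leq_trans hlo _; apply: leq_mul => //; rewrite -subn1; move: hc hsz; move: (count _ _) => x.
move=> h1 h2; rewrite leq_subLR; apply: leq_trans h2 _; exact: leq_add h1 (leqnn _).
Qed.


Lemma dist_behead k phi n T : wf_table k T -> Pn phi n T -> size (tcols T) = mm phi n ->
  dist T (behead (tcols T)).
Proof.
move=> hwf [hc hpr] hs r1 r2 h1 h2 H.
apply: (dist_cols hwf h1 h2).
have [hu [_ [_ Hr]]] := hwf.
have e1 := map_rval (proj1 (Hr _ h1)) hu.
have e2 := map_rval (proj1 (Hr _ h2)) hu.
have s1 := proj2 (hpr _ h1) hs; have s2 := proj2 (hpr _ h2) hs.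
suff e : r1.1 = r2.1 by move=> c _; rewrite e.
rewrite -e1 in s1; rewrite -e2 in s2; rewrite -e1 -e2.
move: s1 s2 H; case: (tcols T) => [|c0 cs] //= s1 s2 H.
have et : map (rval T r1.1) cs = map (rval T r2.1) cs by apply/eq_in_map.
rewrite et in s1 *; congr (_ :: _); apply: (@addIn (sumn (map (rval T r2.1) cs))); by rewrite s1 s2.
Qed.

Lemma UB k phi n m : 1 < k -> (forall a b, a <= b -> phi a <= phi b) ->
  (forall n, n <= phi n) ->
  H_set k psi0 (AA k phi) n m -> m <= phi n + n.
Proof.
move=> hk hmon hphi [T [hA [[a [ha hale]] hd]]].
case: hd => [[_ ->]//|[hT [_ Hmin]]].
have [hwf [n0 [hn0 [hc hpr]]]] := hA.
case: (classic (exists d, in_Pi T d)) => [[d hd]|hnP].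
  have [hdt e] := leaf_tree k hT hd; have := Hmin _ hdt; rewrite e; lia.
case: ha => [[e _]//|[_ [[G [hG eG]] _]]].
have hwt : forall c, c \in tcols T -> wt c = n0.
  move=> c hcc; apply: wt_Cn hn0 _; by move/allP: hc; apply.
have hn0a := psi_a_lb hwf hT hnP hG hwt.
have hn0n : n0 <= n by lia.
have [hm hlo hhi] := mm_facts hn0 (hphi n0).
have hle := size_cols_le hwf (conj hc hpr).
pose cs := if size (tcols T) < mm phi n0 then tcols T else behead (tcols T).
have hcs : {subset cs <= tcols T}.
  rewrite /cs; case: ifP => // _ c; case: (tcols T) => //= c0 s hcs.
  by rewrite in_cons hcs orbT.
have hdist : dist T cs.
  rewrite /cs; case: ifP => h; first exact: dist_cols hwf.
  apply: dist_behead hwf (conj hc hpr) _; lia.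
have hsz : size cs <= (mm phi n0).-1.
  rewrite /cs; case: ifP => h; first lia.
  rewrite size_behead; lia.
have hdt := full_det_tree (ltnW hk) hT hwf hcs hdist.
have := Hmin _ hdt.
have := full_psi k [::] (decT T) (fun c hc => hwt c (hcs c hc)).
move=> h1 h2; have h3 := leq_trans h2 h1.
have h4 : n0 * size cs <= n0 * (mm phi n0).-1 by apply: leq_mul.
have h5 := hmon _ _ hn0n.
apply: leq_trans h3 _; apply: leq_trans h4 _; apply: leq_trans hhi _; lia.
Qed.

Lemma witness k phi n : 1 < k -> (forall n, n <= phi n) -> phi 0 = 0 ->
  exists w, H_set k psi0 (AA k phi) n w /\ phi n <= w.
Proof.
move=> hk hphi h0.
case: (posnP n) => [->|hn].
  exists 0; split; last by rewrite h0.
  exists Lambda; split; first exact: AA_Lambda.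
  split; last by left.
  by exists 0; split => //; left.
have hp := hphi n.
have [a [ha hale]] := UT_psi_a hk hn hp.
have hwf := proj1 (UT_AA hk hn hp).
have hT := UT_ne hn hp.
have [h [[G [hG eG]] Hmin]] := min_ex (P := fun h => exists G, det_tree k G (UT phi n) /\ psi_tree psi0 G = h)
  (ex_intro _ _ (ex_intro _ _ (conj (full_det_tree (ltnW hk) hT hwf (fun c hc => hc) (dist_cols hwf)) erefl))).
exists h; split.
  exists (UT phi n); split; first exact: UT_AA.
  split; first by exists a.
  right; split => //; split; first by exists G.
  by move=> G' hG'; apply: Hmin; exists G'.
rewrite -eG; exact: UT_det_lb hn hp hG.
Qed.

Unset Implicit Arguments.

Theorem theorem3 (k : nat) (phi : nat -> nat) :
  1 < k ->
  (forall m n, m <= n -> phi m <= phi n) ->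
  (forall n, n <= phi n) ->
  phi 0 = 0 ->
  exists (A : table -> Prop) (psi : seq nat -> nat),
    closed_class k A /\ bounded_measure psi /\
    H_everywhere_defined k psi A /\
    (forall n, exists h, H_value k psi A n h /\ phi n <= h <= phi n + n).
Proof.
move=> hk hmon hphi h0.
exists (AA k phi), psi0.
split; first exact: AA_closed_class.
split; first exact: psi0_bounded.
have hub := fun n m => @UB k phi n m hk hmon hphi.
split; first by move=> n; exists (phi n + n); apply: hub.
move=> n.
have [w [hw hpw]] := witness n hk hphi h0.
have [h [hh Hh]] := max_ex (ex_intro _ w hw) (hub n).
exists h; split.
  split; first by exists (phi n + n); apply: hub.
  by split.
rewrite (hub _ _ hh) andbT; exact: leq_trans hpw (Hh _ hw).
Qed.
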